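(* Let $K$ be a Kripke structure over $\mathbf{AP}$, $D(K)$ its deadlock extension, and $s$ a state of $K$. Then for every $\mathsf{CTL}^*_\infty$ state formula $\varphi$: $s\models\varphi$ in $K$ iff $s\models\mathbf{D}(\varphi)$ in $D(K)$; and for every $\mathsf{CTL}^*_\delta$ state formula $\varphi$: $s\models\varphi$ in $D(K)$ iff $s\models\mathbf{E}(\varphi)$ in $K$.
   Context: A Kripke structure is $K=(S,L,\to)$ with $L:S\to\mathcal{P}(\mathbf{AP})$ and $\to\subseteq S\times S$ (not necessarily total). Paths are finite sequences $s_0,\dots,s_n$ or infinite sequences $s_0,s_1,\dots$ with $s_k\to s_{k+1}$; a path is maximal if infinite or if its last state has no successor. The deadlock extension $D(K)$ adds a fresh state $s_\delta$ labelled $\{\delta\}$, where $\delta\notin\mathbf{AP}$ is a fresh atomic proposition, a transition $s_\delta\to s_\delta$, and a transition $u\to s_\delta$ from every state $u$ of $K$ without successors. $\mathsf{CTL}^*_\infty$: state formulas $\varphi::=p\mid\neg\varphi\mid\bigwedge\Phi'\mid\exists\psi$ and path formulas $\psi::=\varphi\mid\neg\psi\mid\bigwedge\Psi'\mid\psi\,\mathsf{U}\,\psi\mid\infty$ ($p\in\mathbf{AP}$, $\Phi',\Psi'$ arbitrary sets). $\mathsf{CTL}^*_\delta$ is the same but without $\infty$ and with atomic propositions from $\mathbf{AP}\cup\{\delta\}$. Validity (state formulas at states, path formulas on maximal paths): $s\models p$ iff $p\in L(s)$; negation and conjunction as usual; $s\models\exists\psi$ iff some maximal path $\pi$ from $s$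 has $\pi\models\psi$; $\pi\models\varphi$ iff its first state satisfies $\varphi$; $\pi\models\psi\,\mathsf{U}\,\psi'$ iff some suffix $\pi'$ of $\pi$ has $\pi'\models\psi'$ and $\pi''\models\psi$ for every suffix $\pi''$ of $\pi$ of which $\pi'$ is a proper suffix; $\pi\models\infty$ iff $\pi$ is infinite. Abbreviations: $\top=\bigwedge\emptyset$, $\psi\vee\psi'=\neg(\neg\psi\wedge\neg\psi')$, $\mathsf{F}\psi=\top\,\mathsf{U}\,\psi$, $\mathsf{G}\psi=\neg\mathsf{F}\neg\psi$. The mapping $\mathbf{D}$ from $\mathsf{CTL}^*_\infty$ to $\mathsf{CTL}^*_\delta$ formulas: $\mathbf{D}(p)=p$; $\mathbf{D}(\neg\varphi)=\neg\delta\wedge\neg\mathbf{D}(\varphi)$; $\mathbf{D}(\bigwedge_{i}\varphi_i)=\bigwedge_i\mathbf{D}(\varphi_i)$; $\mathbf{D}(\exists\psi)=\exists\mathbf{D}(\psi)$; $\mathbf{D}(\neg\psi)=\neg\delta\wedge\neg\mathbf{D}(\psi)$; $\mathbf{D}(\bigwedge_i\psi_i)=\bigwedge_i\mathbf{D}(\psi_i)$; $\mathbf{D}(\psi\,\mathsf{U}\,\psi')=\mathbf{D}(\psi)\,\mathsf{U}\,\mathbf{D}(\psi')$; $\mathbf{D}(\infty)=\neg\mathsf{F}\delta$ (state formulas used as path formulas are translated by the state clauses). The mapping $\mathbf{E}$ from $\mathsf{CTL}^*_\delta$ to $\mathsf{CTL}^*_\infty$ formulas: $\mathbf{E}(p)=p$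 for $p\in\mathbf{AP}$; $\mathbf{E}(\delta)=\neg\top$; $\mathbf{E}$ commutes with $\neg$, $\bigwedge$ and $\exists$; and $\mathbf{E}(\psi\,\mathsf{U}\,\psi')=X\vee(\mathbf{E}(\psi)\,\mathsf{U}\,\mathbf{E}(\psi'))$, where $X=\neg\infty\wedge\mathsf{G}\,\mathbf{E}(\psi)$ if $s_\delta\models\exists\psi'$ (in a deadlock extension; this depends only on $\psi'$ since the only maximal path from $s_\delta$ is $s_\delta,s_\delta,\dots$), and $X=\mathbf{E}(\psi)\,\mathsf{U}\,\neg\top$ otherwise. *)

(* Defs.v *)
From Stdlib Require Import Arith ClassicalEpsilon.
Set Implicit Arguments.

Record kripke (AP : Type) := Kripke {
  St : Type;
  Lab : St -> AP -> Prop;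
  Rel : St -> St -> Prop
}.
Arguments St {AP} k.
Arguments Lab {AP} k _ _.
Arguments Rel {AP} k _ _.

(* A (finite or infinite) sequence of states: [plen = None] means infinite,
   [plen = Some n] means the finite sequence s_0, ..., s_n. *)
Record path (S : Type) := Path { pst : nat -> S; plen : option nat }.
Arguments Path {S} _ _.
Arguments pst {S} _ _.
Arguments plen {S} _.

Definition in_dom {S} (pi : path S) (k : nat) : Prop :=
  match plen pi with None => True | Some n => k <= n end.

Definition is_path {AP} (K : kripke AP) (pi : path (St K)) : Prop :=
  forall k, in_dom pi (S k) -> Rel K (pst pi k) (pst pi (S k)).

Definition is_maximal {AP} (K : kripke AP) (pi : path (St K)) : Prop :=
  match plen pi with
  | None => True
  | Some n => forall t, ~ Rel K (pst pi n) t
  end.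

(* the suffix of pi starting at index k (meaningful for k in the domain) *)
Definition suffix {S} (pi : path S) (k : nat) : path S :=
  Path (fun i => pst pi (k + i)) (option_map (fun n => n - k) (plen pi)).

Inductive sform (A : Type) : Type :=
| SAtom : A -> sform A
| SNeg : sform A -> sform A
| SAnd : forall I : Type, (I -> sform A) -> sform A
| SEx : pform A -> sform A
with pform (A : Type) : Type :=
| PState : sform A -> pform A
| PNeg : pform A -> pform A
| PAnd : forall I : Type, (I -> pform A) -> pform A
| PUntil : pform A -> pform A -> pform A
| PInf : pform A.
Arguments SAtom {A} _. Arguments SNeg {A} _. Arguments SAnd {A} {I} _.
Arguments SEx {A} _. Arguments PState {A} _. Arguments PNeg {A} _.
Arguments PAnd {A} {I} _. Arguments PUntil {A} _ _. Arguments PInf {A}.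

Inductive dsform (A : Type) : Type :=
| DSAtom : A -> dsform A
| DSNeg : dsform A -> dsform A
| DSAnd : forall I : Type, (I -> dsform A) -> dsform A
| DSEx : dpform A -> dsform A
with dpform (A : Type) : Type :=
| DPState : dsform A -> dpform A
| DPNeg : dpform A -> dpform A
| DPAnd : forall I : Type, (I -> dpform A) -> dpform A
| DPUntil : dpform A -> dpform A -> dpform A.
Arguments DSAtom {A} _. Arguments DSNeg {A} _. Arguments DSAnd {A} {I} _.
Arguments DSEx {A} _. Arguments DPState {A} _. Arguments DPNeg {A} _.
Arguments DPAnd {A} {I} _. Arguments DPUntil {A} _ _.

Section Sem.
Context {AP : Type} (K : kripke AP).

Fixpoint sat_s (phi : sform AP) (s : St K) {struct phi} : Prop :=
  match phi with
  | SAtom p => Lab K s p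
  | SNeg phi' => ~ sat_s phi' s
  | SAnd f => forall i, sat_s (f i) s
  | SEx psi => exists pi : path (St K),
      is_path K pi /\ is_maximal K pi /\ pst pi 0 = s /\ sat_p psi pi
  end
with sat_p (psi : pform AP) (pi : path (St K)) {struct psi} : Prop :=
  match psi with
  | PState phi => sat_s phi (pst pi 0)
  | PNeg psi' => ~ sat_p psi' pi
  | PAnd f => forall i, sat_p (f i) pi
  | PUntil a b => exists k, in_dom pi k /\ sat_p b (suffix pi k) /\
                    forall j, j < k -> sat_p a (suffix pi j)
  | PInf => plen pi = None
  end.

Fixpoint dsat_s (phi : dsform AP) (s : St K) {struct phi} : Prop :=
  match phi with
  | DSAtom p => Lab K s p
  | DSNeg phi' => ~ dsat_s phi' s
  | DSAnd f => forall i, dsat_s (f i) s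
  | DSEx psi => exists pi : path (St K),
      is_path K pi /\ is_maximal K pi /\ pst pi 0 = s /\ dsat_p psi pi
  end
with dsat_p (psi : dpform AP) (pi : path (St K)) {struct psi} : Prop :=
  match psi with
  | DPState phi => dsat_s phi (pst pi 0)
  | DPNeg psi' => ~ dsat_p psi' pi
  | DPAnd f => forall i, dsat_p (f i) pi
  | DPUntil a b => exists k, in_dom pi k /\ dsat_p b (suffix pi k) /\
                    forall j, j < k -> dsat_p a (suffix pi j)
  end.
End Sem.

(* ---------- Deadlock extension D(K): None is s_delta, None label is delta ---------- *)
Definition DK {AP : Type} (K : kripke AP) : kripke (option AP) :=
  {| St := option (St K);
     Lab := fun s p => match s, p with
                       | Some s', Some q => Lab K s' q
                       | None, None => True
                       | _, _ => False
                       end;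
     Rel := fun u v => match u, v with
                       | Some u', Some v' => Rel K u' v'
                       | Some u', None => forall t, ~ Rel K u' t
                       | None, None => True
                       | None, Some _ => False
                       end |}.

Definition sand2 {A} (a b : sform A) : sform A := @SAnd A bool (fun x => if x then a else b).
Definition pand2 {A} (a b : pform A) : pform A := @PAnd A bool (fun x => if x then a else b).
Definition ptop {A} : pform A := @PAnd A Empty_set (fun e => match e with end).
Definition stop {A} : sform A := @SAnd A Empty_set (fun e => match e with end).
Definition por2 {A} (a b : pform A) : pform A := PNeg (pand2 (PNeg a) (PNeg b)).
Definition pF {A} (a : pform A) : pform A := PUntil ptop a.
Definition pG {A} (a : pform A) : pform A := PNeg (pF (PNeg a)).

Definition dsand2 {A} (a b : dsform A) : dsform A := @DSAnd A bool (fun x => if x then a else b).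
Definition dpand2 {A} (a b : dpform A) : dpform A := @DPAnd A bool (fun x => if x then a else b).
Definition dptop {A} : dpform A := @DPAnd A Empty_set (fun e => match e with end).
Definition dpF {A} (a : dpform A) : dpform A := DPUntil dptop a.

Definition dlt {AP} : dsform (option AP) := DSAtom None.

Fixpoint Dtr_s {AP} (phi : sform AP) : dsform (option AP) :=
  match phi with
  | SAtom p => DSAtom (Some p)
  | SNeg phi' => dsand2 (DSNeg dlt) (DSNeg (Dtr_s phi'))
  | SAnd f => DSAnd (fun i => Dtr_s (f i))
  | SEx psi => DSEx (Dtr_p psi)
  end
with Dtr_p {AP} (psi : pform AP) : dpform (option AP) :=
  match psi with
  | PState phi => DPState (Dtr_s phi)
  | PNeg psi' => dpand2 (DPNeg (DPState dlt)) (DPNeg (Dtr_p psi'))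
  | PAnd f => DPAnd (fun i => Dtr_p (f i))
  | PUntil a b => DPUntil (Dtr_p a) (Dtr_p b)
  | PInf => DPNeg (dpF (DPState dlt))
  end.

(* ---------- The translation E : CTL*_delta -> CTL*_infty (relative to K) ----------
   The case distinction "s_delta |= exists psi'" is evaluated in D(K); it is
   decided classically. *)
Fixpoint Etr_s {AP} (K : kripke AP) (phi : dsform (option AP)) : sform AP :=
  match phi with
  | DSAtom (Some p) => SAtom p
  | DSAtom None => SNeg stop
  | DSNeg phi' => SNeg (Etr_s K phi')
  | DSAnd f => SAnd (fun i => Etr_s K (f i))
  | DSEx psi => SEx (Etr_p K psi)
  end
with Etr_p {AP} (K : kripke AP) (psi : dpform (option AP)) : pform AP :=
  match psi with
  | DPState phi => PState (Etr_s K phi)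
  | DPNeg psi' => PNeg (Etr_p K psi')
  | DPAnd f => PAnd (fun i => Etr_p K (f i))
  | DPUntil a b =>
      let X := if excluded_middle_informative
                    (dsat_s (DK K) (DSEx b) (None : St (DK K)))
               then pand2 (PNeg PInf) (pG (Etr_p K a))
               else PUntil (Etr_p K a) (PNeg ptop) in
      por2 X (PUntil (Etr_p K a) (Etr_p K b))
  end.

(* Main.v *)
Require Import Defs.
From Stdlib Require Import Arith Lia ClassicalEpsilon Classical FunctionalExtensionality Wf_nat.

Section Aux.
Context {AP : Type} (K : kripke AP).

Definition img (pi : path (St K)) : path (option (St K)) :=
  Path (S := option (St K)) (fun k => match plen pi with
                    | None => Some (pst pi k)
                    | Some n => if k <=? n then Some (pst pi k) else None end) None.

Definition deltapath : path (option (St K)) := Path (S := option (St K)) (fun _ => None) None.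

Lemma img0 pi : pst (img pi) 0 = Some (pst pi 0).
Proof. unfold img; simpl. destruct (plen pi); reflexivity. Qed.

Lemma img_path pi : is_path K pi -> is_maximal K pi -> is_path (DK K) (img pi).
Proof.
  unfold is_path, is_maximal, in_dom, img. intros Hp Hm k _.
  simpl. destruct (plen pi) as [n|] eqn:E; simpl; [change (match n with 0 => false | S m' => k <=? m' end) with (S k <=? n)|].
  - destruct (Nat.leb_spec (S k) n), (Nat.leb_spec k n); try lia.
    + apply Hp. exact H.
    + assert (k = n) by lia. subst. exact Hm.
  - apply Hp. exact I.
Qed.

Lemma img_max pi : is_maximal (DK K) (img pi).
Proof. exact I. Qed.

Lemma in_dom_le (pi : path (St K)) j k : j <= k -> in_dom pi k -> in_dom pi j.
Proof. unfold in_dom. destruct (plen pi); auto; lia. Qed.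

Lemma in_dom0 (pi : path (St K)) : in_dom pi 0.
Proof. unfold in_dom. destruct (plen pi); auto; lia. Qed.

Lemma img_suffix pi k : in_dom pi k -> suffix (img pi) k = img (suffix pi k).
Proof.
  unfold in_dom, suffix, img; simpl. intro H.
  destruct (plen pi) as [n|]; simpl; f_equal.
  apply functional_extensionality; intro i.
  destruct (Nat.leb_spec (k+i) n), (Nat.leb_spec i (n-k)); try reflexivity; lia.
Qed.

Lemma img_suffix_out pi k : ~ in_dom pi k -> suffix (img pi) k = deltapath.
Proof.
  unfold in_dom, suffix, img, deltapath; simpl. intro H.
  destruct (plen pi) as [n|]; [|tauto]. simpl; f_equal.
  apply functional_extensionality; intro i.
  destruct (Nat.leb_spec (k+i) n); try reflexivity; lia.
Qed.

Lemma dk_inf (rho : path (St (DK K))) : is_maximal (DK K) rho -> plen rho = None.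
Proof.
  unfold is_maximal. destruct (plen rho) as [n|]; [|auto]. intro H; exfalso.
  destruct (pst rho n) as [u|] eqn:E.
  - destruct (classic (exists v, Rel K u v)) as [[v Hv]|Hn].
    + apply (H (Some v)). exact Hv.
    + apply (H None). simpl. intros t Ht. apply Hn. eauto.
  - apply (H None). exact I.
Qed.

Lemma delta_ex (b : dpform (option AP)) :
  dsat_s (DK K) (DSEx b) None <-> dsat_p (DK K) b deltapath.
Proof.
  simpl. split.
  - intros [rho [Hp [Hm [H0 Hb]]]].
    pose proof (dk_inf rho Hm) as E.
    assert (forall k, @pst (St (DK K)) rho k = None).
    { induction k; auto. unfold is_path in Hp. specialize (Hp k).
      unfold in_dom in Hp. rewrite E in Hp. specialize (Hp I).
      rewrite IHk in Hp. simpl in Hp. change (@pst (option (St K)) rho (S k) = None). destruct (pst rho (S k)); [contradiction|reflexivity]. }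
    replace deltapath with rho; auto.
    destruct rho as [f l]; simpl in *; subst. unfold deltapath. f_equal.
    apply functional_extensionality; auto.
  - intro H. exists deltapath. repeat split; auto.
Qed.

Lemma dk_paths (rho : path (option (St K))) t :
  is_path (DK K) rho -> is_maximal (DK K) rho -> pst rho 0 = Some t ->
  exists pi, is_path K pi /\ is_maximal K pi /\ pst pi 0 = t /\ rho = img pi.
Proof.
  intros Hp Hm H0.
  pose proof (dk_inf rho Hm) as E.
  assert (Hstep : forall k, Rel (DK K) (pst rho k) (pst rho (S k))).
  { intro k. apply Hp. unfold in_dom. rewrite E. exact I. }
  assert (Hup : forall k j, pst rho k = None -> k <= j -> pst rho j = None).
  { intros k j Hk Hj. induction Hj; auto. specialize (Hstep m).
    rewrite IHHj in Hstep. destruct (pst rho (S m)); simpl in Hstep; tauto. }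
  set (g := fun k => match pst rho k with Some x => x | None => t end).
  destruct (classic (exists k, pst rho k = None)) as [[k Hk]|Hn].
  - assert (exists n u, pst rho n = Some u /\ pst rho (S n) = None) as [n [u [Hn1 Hn2]]].
    { induction k. { rewrite H0 in Hk; discriminate. }
      destruct (pst rho k) as [u|] eqn:Ek; eauto. }
    assert (Hlo : forall j, j <= n -> pst rho j = Some (g j)).
    { intros j Hj. unfold g. destruct (pst rho j) eqn:Ej; auto.
      rewrite (Hup j n Ej Hj) in Hn1; discriminate. }
    exists (Path g (Some n)). split; [|split; [|split]].
    + intros j Hj. unfold in_dom in Hj; simpl in Hj. simpl.
      specialize (Hstep j). rewrite (Hlo j ltac:(lia)), (Hlo (S j) Hj) in Hstep. exact Hstep.
    + unfold is_maximal; simpl. intros v Hv. specialize (Hstep n).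
      rewrite Hn1, Hn2 in Hstep. simpl in Hstep. unfold g in Hv. rewrite Hn1 in Hv.
      exact (Hstep v Hv).
    + unfold g. simpl. rewrite H0. reflexivity.
    + destruct rho as [f l]; simpl in *; subst. unfold img; simpl. f_equal.
      apply functional_extensionality; intro j.
      destruct (Nat.leb_spec j n).
      * apply Hlo; auto.
      * apply (Hup (S n)); auto.
  - exists (Path g None). split; [|split; [|split]].
    + intros j _. simpl. specialize (Hstep j). unfold g.
      destruct (pst rho j) eqn:E1; [|exfalso; eauto].
      destruct (pst rho (S j)) eqn:E2; [|exfalso; eauto]. exact Hstep.
    + exact I.
    + unfold g; simpl; rewrite H0; auto.
    + destruct rho as [f l]; simpl in *; subst. unfold img; simpl. f_equal.
      apply functional_extensionality; intro j. unfold g; simpl.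
      destruct (f j) eqn:Ej; auto. exfalso; eauto.
Qed.

Lemma max_exists (t : St K) : exists pi, is_path K pi /\ is_maximal K pi /\ pst pi 0 = t.
Proof.
  set (step := fun x => match excluded_middle_informative (exists u, Rel K x u) with
                | left h => proj1_sig (constructive_indefinite_description _ h)
                | right _ => x end).
  assert (Hs : forall x, (exists u, Rel K x u) -> Rel K x (step x)).
  { intros x h. unfold step. destruct (excluded_middle_informative _) as [h'|h'].
    - exact (proj2_sig (constructive_indefinite_description _ h')).
    - contradiction. }
  set (f := fun k => Nat.iter k step t).
  destruct (classic (forall k, exists u, Rel K (f k) u)) as [H|H].
  - exists (Path f None). repeat split. intros k _. simpl. apply Hs, H.
  - apply not_all_ex_not in H.
    destruct (dec_inh_nat_subset_has_unique_least_element
                (fun k => ~ exists u, Rel K (f k) u) (fun k => classic _) H)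
      as [n [[Hn Hmin] _]].
    exists (Path f (Some n)). split; [|split].
    + intros k Hk. unfold in_dom in Hk; simpl in Hk. simpl. apply Hs.
      apply NNPP. intro Hc. specialize (Hmin k Hc). lia.
    + intros v Hv. apply Hn. eauto.
    + reflexivity.
Qed.

End Aux.

Scheme sform_mut := Induction for sform Sort Prop
  with pform_mut := Induction for pform Sort Prop.

Section P1.
Context {AP : Type} (K : kripke AP).

Lemma part1 : forall phi : sform AP,
  (forall t, sat_s K phi t <-> dsat_s (DK K) (Dtr_s phi) (Some t : St (DK K))) /\
  (dsat_s (DK K) (Dtr_s phi) (None : St (DK K)) -> forall t, sat_s K phi t).
Proof.
  apply (sform_mut AP
    (fun phi => (forall t, sat_s K phi t <-> dsat_s (DK K) (Dtr_s phi) (Some t : St (DK K))) /\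
      (dsat_s (DK K) (Dtr_s phi) (None : St (DK K)) -> forall t, sat_s K phi t))
    (fun psi => (forall pi, sat_p K psi pi <-> dsat_p (DK K) (Dtr_p psi) (img K pi)) /\
      (dsat_p (DK K) (Dtr_p psi) (deltapath K) -> forall pi, sat_p K psi pi))).
  - intros p. simpl. split; [tauto| contradiction].
  - intros phi [IH1 IH2]. simpl. split.
    + intro t. rewrite IH1. split.
      * intros H [|]; simpl; tauto.
      * intros H. specialize (H false). exact H.
    + intros H. exfalso. apply (H true). exact I.
  - intros I f IH. simpl. split.
    + intro t. split; intros H i; apply (proj1 (IH i)); auto.
    + intros H t i. apply (proj2 (IH i)); auto.
  - intros psi [IH1 IH2]. split.
    + intro t. simpl. split.
      * intros [pi [Hp [Hm [H0 Hs]]]]. exists (img K pi).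
        split; [apply img_path; auto|]. split; [exact I|]. split.
        -- exact (eq_trans (img0 K pi) (f_equal Some H0)).
        -- apply IH1; auto.
      * intros [rho [Hp [Hm [H0 Hs]]]].
        destruct (dk_paths K rho t Hp Hm H0) as [pi [Hp' [Hm' [H0' ->]]]].
        exists pi. repeat split; auto. apply IH1; auto.
    + intros H t. apply (proj1 (delta_ex K _)) in H.
      destruct (max_exists K t) as [pi [Hp [Hm H0]]].
      simpl. exists pi. repeat split; auto.
  - intros phi [IH1 IH2]. split.
    + intro pi. simpl. unfold img; simpl. destruct (plen pi); apply IH1.
    + intros H pi. simpl. apply IH2. exact H.
  - intros psi [IH1 IH2]. split.
    + intro pi. simpl. rewrite IH1. split.
      * intros H [|]; simpl; [unfold img; simpl; destruct (plen pi); simpl; tauto | tauto].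
      * intros H. exact (H false).
    + intros H. exfalso. apply (H true). simpl. tauto.
  - intros I f IH. simpl. split.
    + intro pi. split; intros H i; apply (proj1 (IH i)); auto.
    + intros H pi i. apply (proj2 (IH i)); auto.
  - intros a [IHa1 IHa2] b [IHb1 IHb2]. split.
    + intro pi. simpl. split.
      * intros [k [Hk [Hb Ha]]]. exists k. split; [exact I|]. split.
        -- rewrite img_suffix; auto. apply IHb1; auto.
        -- intros j Hj. rewrite img_suffix by (apply (in_dom_le K pi j k); auto; lia).
           apply IHa1; auto.
      * intros [k [_ [Hb Ha]]].
        destruct (classic (in_dom pi k)) as [Hk|Hk].
        -- exists k. split; auto. split.
           ++ rewrite img_suffix in Hb; auto. apply IHb1; auto.
           ++ intros j Hj. apply IHa1. rewrite <- img_suffix by (apply (in_dom_le K pi j k); auto; lia).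
              auto.
        -- rewrite img_suffix_out in Hb; auto.
           exists 0. split; [apply in_dom0|]. split; [apply IHb2; auto|]. intros; lia.
    + intros [k [_ [Hb _]]] pi. simpl in Hb.
      exists 0. split; [apply in_dom0|]. split; [apply IHb2; auto|]. intros; lia.
  - split.
    + intro pi. simpl. unfold img; simpl. destruct (plen pi) as [n|] eqn:E.
      * split; [discriminate|]. intros H. exfalso. apply H.
        exists (S n). split; [exact I|]. split; [|intros j _ []].
        simpl. rewrite Nat.add_0_r. destruct n as [|m]; [exact I|].
        rewrite (proj2 (Nat.leb_gt (S m) m) ltac:(lia)). exact I.
      * split; [|reflexivity]. intros _ [k [_ [H _]]]. exact H.
    + intros H. exfalso. apply H. exists 0. simpl. split; [exact I|]. split; [exact I|].
      intros; lia.
Qed.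
End P1.

Scheme dsform_mut := Induction for dsform Sort Prop
  with dpform_mut := Induction for dpform Sort Prop.

Section P2.
Context {AP : Type} (K : kripke AP).

Lemma sat_por2 a b pi : sat_p K (por2 a b) pi <-> sat_p K a pi \/ sat_p K b pi.
Proof.
  simpl. split.
  - intro H. apply NNPP. intro Hn. apply H. intros [|]; simpl; tauto.
  - intros H H2. pose proof (H2 true). pose proof (H2 false). simpl in *. tauto.
Qed.

Lemma sat_pand2 a b pi : sat_p K (pand2 a b) pi <-> sat_p K a pi /\ sat_p K b pi.
Proof.
  simpl. split.
  - intro H. exact (conj (H true) (H false)).
  - intros [H1 H2] [|]; auto.
Qed.

Lemma sat_ptop pi : sat_p K ptop pi.
Proof. simpl. intros []. Qed.

Lemma sat_pG a pi : sat_p K (pG a) pi <-> forall k, in_dom pi k -> sat_p K a (suffix pi k).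
Proof.
  simpl. split.
  - intros H k Hk. apply NNPP. intro Hn. apply H. exists k. split; auto. split; auto.
    intros j _ [].
  - intros H [k [Hk [Hn _]]]. apply Hn, H, Hk.
Qed.

Lemma img_suffix' pi k : in_dom pi k -> @suffix (St (DK K)) (img K pi) k = img K (suffix pi k).
Proof. apply img_suffix. Qed.
Lemma img_suffix_out' pi k : ~ in_dom pi k -> @suffix (St (DK K)) (img K pi) k = deltapath K.
Proof. apply img_suffix_out. Qed.

Lemma part2 : forall phi : dsform (option AP),
  forall t, dsat_s (DK K) phi (Some t : St (DK K)) <-> sat_s K (Etr_s K phi) t.
Proof.
  apply (dsform_mut (option AP)
    (fun phi => forall t, dsat_s (DK K) phi (Some t : St (DK K)) <-> sat_s K (Etr_s K phi) t)
    (fun psi => forall pi, dsat_p (DK K) psi (img K pi) <-> sat_p K (Etr_p K psi) pi)).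
  - intros [p|] t; simpl; [tauto|]. split; [contradiction|]. intro H; apply H. intros [].
  - intros phi IH t. simpl. rewrite IH. tauto.
  - intros I f IH t. simpl. split; intros H i; apply IH; auto.
  - intros psi IH t. simpl. split.
    + intros [rho [Hp [Hm [H0 Hs]]]].
      destruct (dk_paths K rho t Hp Hm H0) as [pi [Hp' [Hm' [H0' ->]]]].
      exists pi. repeat split; auto. apply IH; auto.
    + intros [pi [Hp [Hm [H0 Hs]]]]. exists (img K pi).
      split; [apply img_path; auto|]. split; [exact I|]. split.
      * exact (eq_trans (img0 K pi) (f_equal Some H0)).
      * apply IH; auto.
  - intros phi IH pi. simpl. unfold img; simpl. destruct (plen pi); apply IH.
  - intros psi IH pi. simpl. rewrite IH. tauto.
  - intros I f IH pi. simpl. split; intros H i; apply IH; auto.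
  - intros a IHa b IHb pi. change (Etr_p K (DPUntil a b)) with
      (por2 (if excluded_middle_informative
                    (dsat_s (DK K) (DSEx b) (None : St (DK K)))
               then pand2 (PNeg PInf) (pG (Etr_p K a))
               else PUntil (Etr_p K a) (PNeg ptop))
            (PUntil (Etr_p K a) (Etr_p K b))).
    rewrite sat_por2.
    split.
    + intros [k [_ [Hb Ha]]].
      destruct (classic (in_dom pi k)) as [Hk|Hk].
      * right. exists k. split; auto. split.
        -- rewrite img_suffix' in Hb; auto. apply IHb; auto.
        -- intros j Hj. apply IHa. rewrite <- img_suffix' by (apply (in_dom_le K pi j k); auto; lia).
           auto.
      * left. rewrite img_suffix_out' in Hb; auto.
        assert (Hd : dsat_s (DK K) (DSEx b) (None : St (DK K))) by (apply delta_ex; exact Hb).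
        destruct (excluded_middle_informative _) as [_|Hn]; [|contradiction].
        apply sat_pand2. split.
        -- simpl. intro E. apply Hk. unfold in_dom. rewrite E. exact I.
        -- apply sat_pG. intros m Hm. apply IHa. rewrite <- img_suffix' by auto.
           apply Ha. unfold in_dom in *. destruct (plen pi); [lia|tauto].
    + intros [HX|[k [Hk [Hb Ha]]]].
      * destruct (excluded_middle_informative _) as [Hd|Hn].
        -- apply sat_pand2 in HX. destruct HX as [Hinf HG].
           rewrite sat_pG in HG. simpl in Hinf.
           destruct (plen pi) as [n|] eqn:E; [|contradiction].
           exists (S n). split; [exact I|]. split.
           ++ rewrite img_suffix_out' by (unfold in_dom; rewrite E; lia).
              apply delta_ex; exact Hd.
           ++ intros j Hj. assert (Hjd : in_dom pi j) by (unfold in_dom; rewrite E; lia).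
              rewrite img_suffix' by auto. apply IHa. apply HG; auto.
        -- destruct HX as [k [_ [Hk _]]]. exfalso. apply Hk. apply sat_ptop.
      * exists k. split; [exact I|]. split.
        -- rewrite img_suffix' by auto. apply IHb; auto.
        -- intros j Hj. rewrite img_suffix' by (apply (in_dom_le K pi j k); auto; lia).
           apply IHa; auto.
Qed.
End P2.

Theorem theorem8p5 (AP : Type) (K : kripke AP) (s : St K) :
  (forall phi : sform AP,
      sat_s K phi s <-> dsat_s (DK K) (Dtr_s phi) (Some s : St (DK K))) /\
  (forall phi : dsform (option AP),
      dsat_s (DK K) phi (Some s : St (DK K)) <-> sat_s K (Etr_s K phi) s).
Proof.
  split.
  - intro phi. apply (proj1 (part1 K phi)).
  - intro phi. apply part2.
Qed.
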